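(* Let $n\ge1$. (i) For every ordered normed space $E$ and every $\mathbf{x}\in E^{\otimes n}$, $\|\mathbf{x}\|_{\pi,E}\le\|\mathbf{x}\|_{\pi+,E}\le c_+(E)^n\|\mathbf{x}\|_{\pi,E}$. (ii) There exists a constant $\gamma(n)$, not depending on $E$, such that for every ordered normed space $E$ and every $\mathbf{x}\in E^{\vee n}$, $\|\mathbf{x}\|_{\pi s,E}\le\|\mathbf{x}\|_{\pi s+,E}\le\gamma(n)\,\|\mathbf{x}\|_{\pi s,E^+}\le\gamma(n)\,c_+(E)^n\,\|\mathbf{x}\|_{\pi s,E}$.
   Context: All vector spaces are real. An ordered normed space is a real normed space $E$ together with a closed convex cone $E_+\subseteq E$ (its elements are called positive, written $x\ge0$) such that $E=E_+-E_+$ and such that, writing $\|x\|_+:=\inf\{\|y\|+\|z\|: x=y-z,\ y,z\in E_+\}$, the constant $c_+(E):=\sup\{\|x\|_+:\|x\|\le1\}$ is finite. $E^+$ denotes $E$ equipped with the norm $\|\cdot\|_+$. $E^{\otimes n}$ is the algebraic $n$-th tensor power, $E^{\vee n}\subseteq E^{\otimes n}$ is the subspace of symmetric tensors (tensors invariant under every permutation of the $n$ tensor factors), and $x^{\otimes n}:=x\otimes\cdots\otimes x$. For a normed space $F$: $\|\mathbf{x}\|_{\pi,F}:=\inf\{\sum_k|a_k|\,\|x_{1k}\|\cdots\|x_{nk}\| : \mathbf{x}=\sum_k a_k x_{1k}\otimes\cdots\otimes x_{nk}\}$ on $F^{\otimes n}$, and $\|\mathbf{x}\|_{\pi s,F}:=\inf\{\sum_k|a_k|\,\|x_k\|^n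 : \mathbf{x}=\sum_k a_k x_k^{\otimes n},\ x_k\in F\}$ on $F^{\vee n}$ (finite sums, $a_k\in\mathbb{R}$). For an ordered normed space $E$: $\|\mathbf{x}\|_{\pi+,E}$ is defined like $\|\mathbf{x}\|_{\pi,E}$ but with all $x_{ik}\in E_+$, and $\|\mathbf{x}\|_{\pi s+,E}$ is defined like $\|\mathbf{x}\|_{\pi s,E}$ but with all $x_k\in E_+$ (infimum of the empty set being $+\infty$). *)

(* Defs.v *)
From HB Require Import structures.
From mathcomp Require Import all_boot all_order all_algebra perm.
From mathcomp Require Import all_classical all_reals ereal topology normedtype.
Set Implicit Arguments. Unset Strict Implicit. Unset Printing Implicit Defensive.
Import Order.TTheory GRing.Theory Num.Theory.
Import numFieldNormedType.Exports.
Local Open Scope classical_set_scope.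
Local Open Scope ring_scope.

Section Defs.
Variables (R : realType) (E : normedModType R).

Definition convex_cone (Ep : set E) : Prop :=
  Ep 0 /\ (forall x y, Ep x -> Ep y -> Ep (x + y)) /\
  (forall (a : R) x, 0 <= a -> Ep x -> Ep (a *: x)).

Definition generating (Ep : set E) : Prop :=
  forall x : E, exists y z, Ep y /\ Ep z /\ x = y - z.

Definition plus_norm (Ep : set E) (x : E) : R :=
  inf [set r | exists y z, [/\ Ep y, Ep z, x = y - z & r = `|y| + `|z|]].

Definition cplus (Ep : set E) : \bar R :=
  ereal_sup [set (plus_norm Ep x)%:E | x in [set x : E | `|x| <= 1]].

Definition ordered_normed_space (Ep : set E) : Prop :=
  [/\ closed Ep, convex_cone Ep, generating Ep & (cplus Ep < +oo)%E].

(** Algebraic tensor power E^{(x) n}: a tensor is represented by a finite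
    formal sum  sum_k a_k x_{1k} (x) ... (x) x_{nk}, encoded as a list of
    pairs (a_k, (i |-> x_{ik})).  Two formal sums represent the same tensor
    iff every n-multilinear form takes the same value on them (universal
    property of the algebraic tensor product). *)
Definition setc n (v : 'I_n -> E) (i : 'I_n) (w : E) : 'I_n -> E :=
  fun j => if j == i then w else v j.

Definition multilinear n (phi : ('I_n -> E) -> R) : Prop :=
  forall (i : 'I_n) (v : 'I_n -> E) (a : R) (y z : E),
    phi (setc v i (a *: y + z)) = a * phi (setc v i y) + phi (setc v i z).

Definition tensor_eval n (phi : ('I_n -> E) -> R) (s : seq (R * ('I_n -> E))) : R :=
  \sum_(t <- s) t.1 * phi t.2.

Definition tensor_eq n (s t : seq (R * ('I_n -> E))) : Prop :=
  forall phi, multilinear phi -> tensor_eval phi s = tensor_eval phi t.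

Definition tensor_perm n (sigma : 'S_n) (s : seq (R * ('I_n -> E))) :=
  [seq (t.1, fun i => t.2 (sigma i)) | t <- s].

Definition symmetric_tensor n (s : seq (R * ('I_n -> E))) : Prop :=
  forall sigma : 'S_n, tensor_eq (tensor_perm sigma s) s.

(** projective norm w.r.t. a norm-like function nrm, with all factors in P
    (P = setT : ||.||_pi ; P = E_+ : ||.||_{pi+}); inf over empty = +oo *)
Definition proj_norm n (nrm : E -> R) (P : set E) (s : seq (R * ('I_n -> E))) : \bar R :=
  ereal_inf [set (\sum_(t <- s') `|t.1| * \prod_(i < n) nrm (t.2 i))%:E
            | s' in [set s' | tensor_eq s' s /\
                              (forall t, t \in s' -> forall i, P (t.2 i))]].

Definition diag_tensor n (s : seq (R * E)) : seq (R * ('I_n -> E)) :=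
  [seq (t.1, fun _ : 'I_n => t.2) | t <- s].

Definition sym_proj_norm n (nrm : E -> R) (P : set E) (s : seq (R * ('I_n -> E))) : \bar R :=
  ereal_inf [set (\sum_(t <- s') `|t.1| * nrm t.2 ^+ n)%:E
            | s' in [set s' | tensor_eq (diag_tensor n s') s /\
                              (forall t, t \in s' -> P t.2)]].

End Defs.

(* Main.v *)
Require Import Defs.
From HB Require Import structures.
From mathcomp Require Import all_boot all_order all_algebra perm.
From mathcomp Require Import all_classical all_reals ereal topology normedtype.
From mathcomp Require Import ring lra.
Import Order.TTheory GRing.Theory Num.Theory.
Import numFieldNormedType.Exports.
Local Open Scope classical_set_scope.
Local Open Scope ring_scope.

Section Expand.
Variables (R : realType) (E : normedModType R) (n : nat).
Implicit Types (T : seq (nat * ('I_n -> E))) (l : seq 'I_n).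

Definition stepN (A B : 'I_n -> E) (i : 'I_n) T :=
  flatten [seq [:: (p.1, setc p.2 i (A i)); (p.1.+1, setc p.2 i (B i))] | p <- T].

Fixpoint expandN (A B : 'I_n -> E) l T :=
  if l is i :: l' then expandN A B l' (stepN A B i T) else T.

Definition fillv (A B : 'I_n -> E) (t : R) l (v : 'I_n -> E) : 'I_n -> E :=
  fun i => if i \in l then A i + t *: B i else v i.

Lemma setcE (v : 'I_n -> E) i w j : setc v i w j = if j == i then w else v j.
Proof. by []. Qed.

Lemma eval_expandN (A B : 'I_n -> E) (t : R) (phi : ('I_n -> E) -> R) l T :
  multilinear phi -> uniq l ->
  \sum_(p <- expandN A B l T) t ^+ p.1 * phi p.2 =
  \sum_(p <- T) t ^+ p.1 * phi (fillv A B t l p.2).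
Proof.
move=> ml; elim: l T => [|i l IH] T /=.
  move=> _; apply: eq_bigr => p _.
  have -> // : fillv A B t [::] p.2 = p.2.
  by apply: funext => j; rewrite /fillv in_nil.
move=> /andP[il ul]; rewrite IH //.
elim: T => [|p T IHT]; first by rewrite /stepN /= !big_nil.
rewrite /stepN /= !big_cons IHT addrA; congr (_ + _).
have -> : fillv A B t l (setc p.2 i (A i)) = setc (fillv A B t l p.2) i (A i).
  apply: funext => j; rewrite /fillv /setc; case: eqP => [->|//].
  by rewrite (negbTE il).
have -> : fillv A B t l (setc p.2 i (B i)) = setc (fillv A B t l p.2) i (B i).
  apply: funext => j; rewrite /fillv /setc; case: eqP => [->|//].
  by rewrite (negbTE il).
have -> : fillv A B t (i :: l) p.2 = setc (fillv A B t l p.2) i (t *: B i + A i).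
  apply: funext => j; rewrite /fillv /setc in_cons.
  by case: (eqVneq j i) => [->|ji] /=; rewrite ?eqxx // addrC.
rewrite ml exprSr; ring.
Qed.

Lemma pos_expandN (A B : 'I_n -> E) (P : E -> Prop) l T :
  (forall i, P (A i)) -> (forall i, P (B i)) ->
  (forall p, p \in T -> forall i, i \notin l -> P (p.2 i)) ->
  forall p, p \in expandN A B l T -> forall i, P (p.2 i).
Proof.
move=> PA PB; elim: l T => [|i l IH] T /= HT.
  by move=> p pT j; apply: HT.
apply: IH => p /flattenP[s /mapP[q qT ->]]; rewrite !inE => /orP[]/eqP-> j jl /=;
  rewrite /setc; case: eqP => [_|/eqP ji];
  first [ by apply: PA | by apply: PB | apply: HT => //; by rewrite in_cons negb_or ji ].
Qed.

Lemma deg_expandN (A B : 'I_n -> E) K l T :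
  (forall p, p \in T -> (p.1 <= K)%N) ->
  forall p, p \in expandN A B l T -> (p.1 <= K + size l)%N.
Proof.
elim: l K T => [|i l IH] K T /= HT.
  by move=> p /HT; rewrite addn0.
move=> p /(IH K.+1 (stepN A B i T)); rewrite addSnnS; apply.
move=> q /flattenP[s /mapP[r rT ->]]; rewrite !inE => /orP[]/eqP-> /=.
  by apply: leqW; apply: HT.
by rewrite ltnS; apply: HT.
Qed.

Lemma norm_expandN (A B : 'I_n -> E) l T : uniq l ->
  \sum_(p <- expandN A B l T) \prod_(i < n) `|p.2 i| =
  \sum_(p <- T) \prod_(i < n) (if i \in l then `|A i| + `|B i| else `|p.2 i|).
Proof.
elim: l T => [|i l IH] T /=.
  by move=> _; apply: eq_bigr => p _; apply: eq_bigr => j _; rewrite ?in_nil.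
move=> /andP[il ul]; rewrite IH //.
elim: T => [|p T IHT]; first by rewrite /stepN /= !big_nil.
rewrite /stepN /= !big_cons IHT addrA; congr (_ + _).
rewrite (bigD1 i) //= [X in _ + X](bigD1 i) //= [X in _ = X](bigD1 i) //=.
rewrite /setc eqxx (negbTE il) in_cons eqxx /= mulrDl; congr (_ * _ + _ * _).
  by apply: eq_bigr => j /negbTE ji; rewrite ji in_cons ji.
by apply: eq_bigr => j /negbTE ji; rewrite ji in_cons ji.
Qed.

End Expand.


Lemma moment (R : realType) n : exists w : 'I_n.+1 -> R,
  forall k, (k <= n)%N -> \sum_(m < n.+1) w m * (m%:R) ^+ k = (-1) ^+ k.
Proof.
pose a : 'rV[R]_n.+1 := \row_j (j%:R).
pose V := Vandermonde n.+1 a.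
pose b : 'M[R]_(n.+1, 1) := \col_(k < n.+1) ((-1) ^+ k).
have VU : V \in unitmx.
  rewrite unitmxE /V det_Vandermonde unitfE; apply/prodf_neq0 => i _.
  apply/prodf_neq0 => j ij; rewrite !mxE subr_eq0 eqr_nat.
  by rewrite eq_sym neq_ltn ij.
exists (fun m => (invmx V *m b) m 0) => k kn.
have := congr1 (fun M : 'M[R]_(n.+1, 1) => M (Ordinal (kn : (k < n.+1)%N)) 0) (mulKVmx VU b).
rewrite /= !mxE => <-; apply: eq_bigr => m _; rewrite /V /Vandermonde !mxE mulrC.
by [].
Qed.

Lemma powbound (R : realType) (c e : R) n : 0 <= c -> 0 <= e -> e <= 1 ->
  (c + e) ^+ n <= c ^+ n + e * (n%:R * (c + 1) ^+ n).
Proof.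
move=> c0 e0 e1; elim: n => [|n IH]; first by rewrite !expr0 mul0r mulr0 addr0.
have X0 : 0 <= c ^+ n by apply: exprn_ge0.
have Y0 : 0 <= (c + 1) ^+ n by apply: exprn_ge0; lra.
have XY : c ^+ n <= (c + 1) ^+ n by apply: lerXn2r; rewrite ?nnegrE; lra.
have Z1 : (c + e) * (c + e) ^+ n <= (c + e) * (c ^+ n + e * (n%:R * (c + 1) ^+ n)).
  by apply: ler_wpM2l => //; lra.
have n0 : 0 <= n%:R :> R by [].
rewrite !exprS mulrSr.
set X := c ^+ n in X0 XY Z1 *; set Y := (c + 1) ^+ n in Y0 XY Z1 *.
set N := n%:R in n0 Z1 *.
apply: (le_trans Z1).
have h1 : e * X <= e * ((c + 1) * Y) by apply: ler_wpM2l => //; nra.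
have h2 : 0 <= (1 - e) * (e * (N * Y)) by apply: mulr_ge0; [lra | apply: mulr_ge0 => //; apply: mulr_ge0].
nra.
Qed.

Lemma eps_lim (R : realType) (A : \bar R) (K c V : R) n :
  0 <= K -> 0 <= c -> 0 <= V ->
  (forall e, 0 < e -> e <= 1 -> (A <= (K * (c + e) ^+ n * V)%:E)%E) ->
  (A <= (K * c ^+ n * V)%:E)%E.
Proof.
move=> K0 c0 V0 H; apply/lee_addgt0Pr => eps eps0.
pose M := K * (n%:R * (c + 1) ^+ n) * V.
have M0 : 0 <= M.
  by apply: mulr_ge0 => //; apply: mulr_ge0 => //; apply: mulr_ge0 => //; apply: exprn_ge0; lra.
pose e := Num.min 1 (eps / (M + 1)).
have e0 : 0 < e by rewrite lt_min ltr01 /= divr_gt0 //; lra.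
have e1 : e <= 1 by rewrite ge_min lexx.
have e2 : e <= eps / (M + 1) by rewrite ge_min lexx orbT.
have eM : e * M <= eps.
  have : e * (M + 1) <= eps by rewrite -ler_pdivlMr //; lra.
  nra.
apply: (le_trans (H e e0 e1)); rewrite -EFinD lee_fin.
have := @powbound R c e n c0 (ltW e0) e1.
set P := (c + e) ^+ n; set Q := c ^+ n; set N := n%:R * (c + 1) ^+ n => hP.
have : K * P * V <= K * (Q + e * N) * V.
  by apply: ler_wpM2r => //; apply: ler_wpM2l.
have -> : K * (Q + e * N) * V = K * Q * V + e * M by rewrite /M /N; ring.
lra.
Qed.

Lemma inf_scale (R : realType) (T : Type) (S : set T) (f : T -> R) (A : \bar R) (K : R) :
  0 < K -> (forall s, S s -> (A <= (K * f s)%:E)%E) ->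
  (A <= K%:E * ereal_inf [set (f s)%:E | s in S])%E.
Proof.
move=> K0 H; rewrite -ereal_inf_pZl //; apply: le_ereal_inf_tmp => _ [_ [s Ss <-] <-].
by rewrite -EFinM; exact: H.
Qed.


Set Implicit Arguments.
Section PN.
Variables (R : realType) (E : normedModType R) (Ep : set E).
Hypotheses (cone : convex_cone Ep) (gen : generating Ep) (fin : (cplus Ep < +oo)%E).

Definition SP x := [set r : R | exists y z, [/\ Ep y, Ep z, x = y - z & r = `|y| + `|z|]].

Lemma Ep0 : Ep 0. Proof. by case: cone. Qed.
Lemma EpD y z : Ep y -> Ep z -> Ep (y + z).
Proof. by case: cone => _ [H _]; apply: H. Qed.
Lemma EpZ (a : R) y : 0 <= a -> Ep y -> Ep (a *: y).
Proof. by case: cone => _ [_ H]; apply: H. Qed.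

Lemma SP_ne x : SP x !=set0.
Proof.
have [y [z [Py [Pz xE]]]] := gen x.
exists (`|y| + `|z|). exists y, z. by split.
Qed.

Lemma SP_lb x : lbound (SP x) `|x|.
Proof. by move=> _ [y [z [Py Pz -> ->]]]; apply: ler_normB. Qed.

Lemma SP_hl x : has_lbound (SP x).
Proof. by exists `|x|; apply: SP_lb. Qed.

Lemma pn_ge x : `|x| <= plus_norm Ep x.
Proof. by apply: lb_le_inf; [apply: SP_ne | apply: SP_lb]. Qed.

Lemma pn_le x y z : Ep y -> Ep z -> x = y - z -> plus_norm Ep x <= `|y| + `|z|.
Proof. by move=> Py Pz xE; apply: (ge_inf (SP_hl x)); exists y, z. Qed.

Lemma pn_lt x r : plus_norm Ep x < r ->
  exists y z, [/\ Ep y, Ep z, x = y - z & `|y| + `|z| < r].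
Proof.
move=> /(inf_lt (SP_ne x))[_ [y [z [Py Pz xE ->]]] lt].
by exists y, z.
Qed.

Let c := fine (cplus Ep).

Lemma cplusE : cplus Ep = c%:E.
Proof.
have h : ((plus_norm Ep 0)%:E <= cplus Ep)%E.
  by apply: ereal_sup_ubound; exists 0 => //=; rewrite normr0 ler01.
rewrite /c fineK // fin_numE; apply/andP; split; last by rewrite lt_eqF.
by apply/negP => /eqP e; rewrite e leeNy_eq in h.
Qed.

Lemma c_ub x : `|x| <= 1 -> plus_norm Ep x <= c.
Proof.
move=> x1; rewrite -lee_fin -cplusE; apply: ereal_sup_ubound; by exists x.
Qed.

Lemma c_ge0 : 0 <= c.
Proof.
have h : `|0 : E| <= 1 by rewrite normr0 ler01.
apply: (le_trans _ (@c_ub 0 h)); apply: (le_trans _ (pn_ge 0)); exact: normr_ge0.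
Qed.

Lemma dec1 x e : 0 < e ->
  exists y z, [/\ Ep y, Ep z, x = y - z & `|y| + `|z| <= (c + e) * `|x|].
Proof.
move=> e0; have [->|x0] := eqVneq x 0.
  by exists 0, 0; rewrite subr0 normr0 addr0 mulr0; split => //; apply: Ep0.
have r0 : 0 < `|x| by rewrite normr_gt0.
pose u := `|x|^-1 *: x.
have u1 : `|u| <= 1.
  by rewrite /u normrZ normrV ?unitfE ?normr_eq0 // normr_id mulVf ?normr_eq0.
have [y [z [Py Pz uE lt]]] : exists y z, [/\ Ep y, Ep z, u = y - z & `|y| + `|z| < c + e].
  by apply: pn_lt; apply: (le_lt_trans (@c_ub u u1)); rewrite ltrDl.
exists (`|x| *: y), (`|x| *: z); split.
- by apply: EpZ => //; apply: ltW.
- by apply: EpZ => //; apply: ltW.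
- by rewrite -scalerBr -uE /u scalerA mulfV ?normr_eq0 // scale1r.
- rewrite !normrZ normr_id -mulrDr mulrC; apply: ler_wpM2r; [exact: ltW | exact: ltW].
Qed.

Lemma pn_lec x : plus_norm Ep x <= c * `|x|.
Proof.
apply/ler_addgt0Pr => e e0.
have [y [z [Py Pz xE le]]] := dec1 x (e / (`|x| + 1)) (divr_gt0 e0 (ltr_wpDl (normr_ge0 x) ltr01)).
apply: (le_trans (pn_le Py Pz xE)); apply: (le_trans le).
rewrite mulrDl lerD2l.
have h : `|x| / (`|x| + 1) <= 1.
  by rewrite ler_pdivrMr ?ltr_wpDl // mul1r lerDl.
rewrite mulrAC -mulrA -[X in _ <= X]mulr1.
by apply: ler_wpM2l => //; exact: ltW.
Qed.

Lemma dec2 x e : 0 < e ->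
  exists y z, [/\ Ep y, Ep z, x = y - z & `|y| + `|z| <= (1 + e) * plus_norm Ep x].
Proof.
move=> e0; have p0 : 0 <= plus_norm Ep x by apply: (le_trans _ (pn_ge x)).
have [pz|pp] := eqVneq (plus_norm Ep x) 0.
  have x0 : x = 0 by apply/eqP; rewrite -normr_le0 -pz; apply: pn_ge.
  by exists 0, 0; rewrite pz x0 subr0 normr0 addr0 mulr0; split => //; apply: Ep0.
have pp' : 0 < plus_norm Ep x by rewrite lt_def pp.
have hl : plus_norm Ep x < (1 + e) * plus_norm Ep x by rewrite mulrDl mul1r ltrDl mulr_gt0.
have [y [z [Py Pz xE lt]]] := @pn_lt x _ hl.
by exists y, z; split => //; apply: ltW.
Qed.

Lemma c0_triv : c = 0 -> forall x : E, x = 0.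
Proof.
move=> c0 x; apply/eqP; rewrite -normr_le0.
by apply: (le_trans (pn_ge x)); apply: (le_trans (pn_lec x)); rewrite c0 mul0r.
Qed.

End PN.
Unset Implicit Arguments.


Lemma ml_zero (R : realType) (E : normedModType R) n (phi : ('I_n -> E) -> R) i v :
  multilinear phi -> phi (setc v i 0) = 0.
Proof.
move=> ml; have := ml i v 1 0 0; rewrite scale1r addr0 mul1r => h; lra.
Qed.

Lemma partI (R : realType) (n : nat) (E : normedModType R) (Ep : set E) :
  ordered_normed_space Ep -> forall x : seq (R * ('I_n -> E)),
  (proj_norm (fun v : E => `|v|%R) Ep x
          <= ((fine (cplus Ep)) ^+ n)%:E * proj_norm (fun v : E => `|v|%R) setT x)%E.
Proof.
move=> [cl cone gen fin] x.
set c := fine (cplus Ep).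
have c0 : 0 <= c := c_ge0 gen fin.
pose f (s : seq (R * ('I_n -> E))) := \sum_(t <- s) `|t.1| * \prod_(i < n) `|t.2 i|.
have f0 s : 0 <= f s.
  by apply: sumr_ge0 => t _; apply: mulr_ge0 => //; apply: prodr_ge0.
have claim : forall s, tensor_eq s x -> (proj_norm (fun v : E => `|v|%R) Ep x <= (c ^+ n * f s)%:E)%E.
  move=> s Hs; rewrite -[c ^+ n]mul1r; apply: eps_lim => //; move=> e e0 e1.
  have D : forall v : E, exists p : E * E,
      [/\ Ep p.1, Ep p.2, v = p.1 - p.2 & `|p.1| + `|p.2| <= (c + e) * `|v|].
    by move=> v; have [y [z [Py Pz vE le]]] := dec1 cone gen fin v e e0; exists (y, z).
  have [dd Hd] := choice D.
  pose A (t : R * ('I_n -> E)) := fun i => (dd (t.2 i)).1.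
  pose B (t : R * ('I_n -> E)) := fun i => (dd (t.2 i)).2.
  pose rep (t : R * ('I_n -> E)) := [seq (t.1 * (-1) ^+ p.1, p.2) |
                 p <- expandN R E n (A t) (B t) (enum 'I_n) [:: (0%N, t.2)]].
  pose s2 := flatten (map rep s).
  have fill t : fillv R E n (A t) (B t) (-1) (enum 'I_n) t.2 = t.2.
    apply: funext => i; rewrite /fillv mem_enum scaleN1r /A /B.
    by have [_ _ <- _] := Hd (t.2 i).
  apply: ge_ereal_inf; exists (f s2)%:E.
    exists s2 => //; split.
      move=> phi ml; rewrite -(Hs phi ml) /tensor_eval /s2 big_flatten /= big_map.
      apply: eq_bigr => t _; rewrite /rep big_map /=.
      under eq_bigr do rewrite -mulrA.
      rewrite -big_distrr /= eval_expandN ?enum_uniq // big_cons big_nil expr0 mul1r addr0.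
      by rewrite fill.
    move=> t /flattenP[r /mapP[t0 t0s ->]] /mapP[p pE ->] i /=.
    apply: (pos_expandN R E n (A t0) (B t0) Ep _ _ _ _ _ _ pE i).
    - by move=> j; rewrite /A; have [] := Hd (t0.2 j).
    - by move=> j; rewrite /B; have [] := Hd (t0.2 j).
    - by move=> q _ j; rewrite mem_enum.
  rewrite lee_fin /f /s2 big_flatten /= big_map mul1r big_distrr /=.
  apply: ler_sum => t _; rewrite /rep big_map /=.
  under eq_bigr do rewrite normrM normrX normrN1 expr1n mulr1.
  rewrite -big_distrr /= norm_expandN ?enum_uniq // big_cons big_nil addr0.
  rewrite mulrCA; apply: ler_wpM2l => //.
  have hp : (c + e) ^+ n = \prod_(i < n) (c + e) by rewrite prodr_const card_ord.
  rewrite hp -big_split /=.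
  apply: ler_prod => i _; rewrite mem_enum; apply/andP; split.
    by apply: addr_ge0.
  by rewrite /A /B; have [_ _ _ ->] := Hd (t.2 i).
have cn0 : 0 <= c ^+ n by apply: exprn_ge0.
move: cn0; rewrite le0r => /orP[/eqP cz|cp].
  rewrite cz mul0e; have := claim x (fun _ _ => erefl); by rewrite cz mul0r.
rewrite /proj_norm; apply: inf_scale => // s [Hs _]; exact: claim.
Qed.


Lemma key (R : realType) (E : normedModType R) n (w : 'I_n.+1 -> R)
  (hw : forall k, (k <= n)%N -> \sum_(m < n.+1) w m * (m%:R) ^+ k = (-1) ^+ k)
  (phi : ('I_n -> E) -> R) (ml : multilinear phi) (y z : E) :
  \sum_(m < n.+1) w m * phi (fun _ => y + m%:R *: z) = phi (fun _ => y - z).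
Proof.
pose TN := expandN R E n (fun _ => y) (fun _ => z) (enum 'I_n) [:: (0%N, fun _ : 'I_n => 0 : E)].
have ev t : phi (fun _ => y + t *: z) = \sum_(p <- TN) t ^+ p.1 * phi p.2.
  rewrite eval_expandN ?enum_uniq // big_cons big_nil expr0 mul1r addr0.
  by congr phi; apply: funext => i; rewrite /fillv mem_enum.
have -> : (fun _ : 'I_n => y - z) = (fun _ => y + (-1) *: z).
  by apply: funext => i; rewrite scaleN1r.
rewrite ev.
under eq_bigr do rewrite ev big_distrr /=.
rewrite exchange_big /=; apply: eq_big_seq => p pT.
under eq_bigr do rewrite mulrA.
rewrite -big_distrl /= hw //.
have := deg_expandN R E n (fun _ => y) (fun _ => z) 0 (enum 'I_n) [:: (0%N, fun _ : 'I_n => 0 : E)] _ p pT.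
rewrite size_enum_ord add0n; apply.
by move=> q; rewrite inE => /eqP ->.
Qed.

Lemma subset_le (R : realType) (T : Type) (S1 S2 : set T) (f : T -> R) :
  S1 `<=` S2 -> (ereal_inf [set (f s)%:E | s in S2] <= ereal_inf [set (f s)%:E | s in S1])%E.
Proof.
move=> H; apply: ereal_inf_le_tmp => _ [s Hs <-]; exists s => //; exact: H.
Qed.


Theorem lemma4p6 (R : realType) (n : nat) : (1 <= n)%N ->
  (forall (E : normedModType R) (Ep : set E), ordered_normed_space Ep ->
     forall x : seq (R * ('I_n -> E)),
       (proj_norm (fun v : E => `|v|%R) setT x <= proj_norm (fun v : E => `|v|%R) Ep x)%E /\
       (proj_norm (fun v : E => `|v|%R) Ep x
          <= ((fine (cplus Ep)) ^+ n)%:E * proj_norm (fun v : E => `|v|%R) setT x)%E)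
  /\
  (exists gamma : R,
    forall (E : normedModType R) (Ep : set E), ordered_normed_space Ep ->
     forall x : seq (R * ('I_n -> E)), symmetric_tensor x ->
       [/\ (sym_proj_norm (fun v : E => `|v|%R) setT x <= sym_proj_norm (fun v : E => `|v|%R) Ep x)%E,
           (sym_proj_norm (fun v : E => `|v|%R) Ep x
              <= gamma%:E * sym_proj_norm (plus_norm Ep) setT x)%E
         & (gamma%:E * sym_proj_norm (plus_norm Ep) setT x
              <= (gamma * (fine (cplus Ep)) ^+ n)%:E * sym_proj_norm (fun v : E => `|v|%R) setT x)%E]).
Proof.
move=> n1; split.
  move=> E Ep ons x; split; last exact: partI.
  by apply: subset_le => s [Hs _]; split.
have [w hw] := @moment R n.
pose N : R := n.+1%:R.
pose S := \sum_(m < n.+1) `|w m| * N ^+ n.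
have S0 : 0 <= S by apply: sumr_ge0 => m _; apply: mulr_ge0 => //; apply: exprn_ge0.
exists (1 + S) => E Ep [cl cone gen fin] x _.
set gamma := 1 + S.
have g0 : 0 < gamma by rewrite /gamma; lra.
set c := fine (cplus Ep).
have c0 : 0 <= c := c_ge0 gen fin.
have pn0 v : 0 <= plus_norm Ep v by apply: (le_trans _ (pn_ge gen v)).
split.
- by apply: subset_le => s [Hs _]; split.
- pose g (s : seq (R * E)) := \sum_(t <- s) `|t.1| * plus_norm Ep t.2 ^+ n.
  have gs0 s : 0 <= g s.
    by apply: sumr_ge0 => t _; apply: mulr_ge0 => //; apply: exprn_ge0.
  rewrite /sym_proj_norm; apply: inf_scale => // s [Hs _].
  have -> : gamma * g s = gamma * 1 ^+ n * g s by rewrite expr1n mulr1.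
  apply: eps_lim; [exact: ltW | exact: ler01 | exact: gs0 | ].
  move=> e e0 e1.
  have D : forall v : E, exists p : E * E,
      [/\ Ep p.1, Ep p.2, v = p.1 - p.2 & `|p.1| + `|p.2| <= (1 + e) * plus_norm Ep v].
    by move=> v; have [y [z [Py Pz vE le]]] := dec2 cone gen v e e0; exists (y, z).
  have [dd Hd] := choice D.
  pose Y (t : R * E) := (dd t.2).1.
  pose Z (t : R * E) := (dd t.2).2.
  pose rep (t : R * E) := [seq (t.1 * w m, Y t + (m%:R) *: Z t) | m <- index_enum 'I_n.+1].
  pose s2 := flatten (map rep s).
  apply: ge_ereal_inf; exists (\sum_(t <- s2) `|t.1| * `|t.2| ^+ n)%:E.
    exists s2 => //; split.
      move=> phi ml; rewrite -(Hs phi ml) /tensor_eval /diag_tensor big_map.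
      rewrite [RHS]big_map /s2 big_flatten big_map /=.
      apply: eq_bigr => t _; rewrite /rep big_map /=.
      under eq_bigr do rewrite -mulrA.
      rewrite -big_distrr /= key //; congr (_ * phi _).
      by apply: funext => i; rewrite /Y /Z; have [_ _ <- _] := Hd t.2.
    move=> t /flattenP[r /mapP[t0 t0s ->]] /mapP[m _ ->] /=.
    have [Py Pz _ _] := Hd t0.2.
    by apply: EpD => //; apply: EpZ.
  rewrite lee_fin /s2 big_flatten /= big_map /g big_distrr /=.
  apply: ler_sum => t _; rewrite /rep big_map /=.
  have [Py Pz tE le] := Hd t.2.
  set p := plus_norm Ep t.2.
  have bound (m : 'I_n.+1) : `|Y t + m%:R *: Z t| <= N * ((1 + e) * p).
    apply: (le_trans (ler_normD _ _)); rewrite normrZ ger0_norm //.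
    have mN : m%:R <= N by rewrite /N ler_nat; apply: ltnW.
    have N1 : 1 <= N by rewrite /N ler1n.
    have hY := normr_ge0 (Y t); have hZ := normr_ge0 (Z t).
    have h2 : `|Y t| + `|Z t| <= (1 + e) * p by [].
    have : `|Y t| + m%:R * `|Z t| <= N * (`|Y t| + `|Z t|) by nra.
    move=> h; apply: (le_trans h); apply: ler_wpM2l => //; lra.
  apply: (@le_trans _ _ (\sum_(m < n.+1) `|w m| * N ^+ n * (`|t.1| * ((1 + e) ^+ n * p ^+ n)))).
    apply: ler_sum => m _; rewrite normrM.
    have -> : `|w m| * N ^+ n * (`|t.1| * ((1 + e) ^+ n * p ^+ n)) =
              `|t.1| * `|w m| * (N * ((1 + e) * p)) ^+ n by rewrite !exprMn; ring.
    apply: ler_wpM2l; first by apply: mulr_ge0.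
    by apply: lerXn2r; rewrite ?nnegrE //; apply: (le_trans (normr_ge0 _) (bound m)).
  rewrite -big_distrl /= -/S.
  have hT : 0 <= `|t.1| * ((1 + e) ^+ n * p ^+ n).
    by apply: mulr_ge0 => //; apply: mulr_ge0; apply: exprn_ge0; [lra | exact: pn0].
  have -> : gamma * (1 + e) ^+ n * (`|t.1| * p ^+ n) = gamma * (`|t.1| * ((1 + e) ^+ n * p ^+ n)) by ring.
  by apply: ler_wpM2r => //; rewrite /gamma lerDr.
- pose f (s : seq (R * E)) := \sum_(t <- s) `|t.1| * `|t.2| ^+ n.
  have cn0 : 0 <= c ^+ n by apply: exprn_ge0.
  move: cn0; rewrite le0r => /orP[/eqP cz|cp].
    rewrite cz mulr0 mul0e.
    have cz' : c = 0 by apply/eqP; move/eqP: cz; rewrite expf_eq0 => /andP[].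
    have triv := c0_triv cone gen fin cz'.
    have i0 : 'I_n by exists 0%N.
    have inf0 : (sym_proj_norm (plus_norm Ep) setT x <= 0%:E)%E.
      apply: ge_ereal_inf; exists 0%:E => //; exists [::]; last by rewrite big_nil.
      split => // phi ml; rewrite /tensor_eval /diag_tensor /= big_nil.
      rewrite big1 // => t _.
      have -> : t.2 = setc t.2 i0 0 by apply: funext => j; rewrite /setc !(triv (t.2 j)) if_same.
      by rewrite ml_zero // mulr0.
    by rewrite -(mule0 gamma%:E); apply: lee_wpmul2l => //; rewrite lee_fin; exact: ltW.
  rewrite /sym_proj_norm; apply: inf_scale; first by apply: mulr_gt0.
  move=> s [Hs _].
  apply: (@le_trans _ _ (gamma%:E * (\sum_(t <- s) `|t.1| * plus_norm Ep t.2 ^+ n)%:E)%E).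
    apply: lee_wpmul2l; first by rewrite lee_fin; exact: ltW.
    by apply: ereal_inf_lbound; exists s.
  rewrite -EFinM lee_fin -mulrA; apply: ler_wpM2l; first exact: ltW.
  rewrite big_distrr /=; apply: ler_sum => t _.
  rewrite mulrCA; apply: ler_wpM2l => //.
  rewrite -exprMn; apply: lerXn2r; rewrite ?nnegrE //.
    by apply: mulr_ge0.
  exact: pn_lec.
Qed.
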